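(* Assume that $\delta=\delta_1\cdots\delta_m$ is a permutation of length $m$ and $\pi=\pi_1\cdots\pi_n$ is a permutation of length $n$, disjoint from each other, where $\mathrm{des}(\delta) = r$ and $\mathrm{des}(\pi) = s$. Moreover, $\delta_1<\delta_2$ and all of the elements of $\delta$ are larger than the elements of $\pi$. Then \begin{align*} (1)\quad & \sum_{\substack{\alpha \in \mathrm{Sh}_l(\pi,\delta) \\ \mathrm{des}(\alpha) = d}} q^{\mathrm{maj}(\alpha)}= {m-r+s \brack d-r} {n-s+r-1\brack d-s-1} q^{\mathrm{maj}(\delta) + \mathrm{maj}(\pi) + (d - s)(d - r)}, \\ (2)\quad & \sum_{\substack{\alpha \in \mathrm{Sh}_{ls}(\pi,\delta) \\ \mathrm{des}(\alpha) = d}} q^{\mathrm{maj}(\alpha)}= {m-r+s-1 \brack d-r} {n-s+r-1\brack d-s-1} q^{\mathrm{maj}(\delta) + \mathrm{maj}(\pi) + (d - s)(d - r)}, \\ (3)\quad & \sum_{\substack{\alpha \in \mathrm{Sh}_{ll}(\pi,\delta) \\ \mathrm{des}(\alpha) = d}} q^{\mathrm{maj}(\alpha)}= {m-r+s-1 \brack d-r} {n-s+r-1\brack d-s-1} q^{\mathrm{maj}(\delta) + \mathrm{maj}(\pi) + (d- s+1)(d - r)}. \end{align*}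
   Context: A permutation of length $n$ here means a sequence of $n$ distinct integers (not necessarily $1,\dots,n$); two permutations are disjoint if they have no letters in common. For $\alpha=\alpha_1\cdots\alpha_n$, $\mathrm{Des}(\alpha)=\{i: \alpha_i>\alpha_{i+1}\}$, $\mathrm{des}(\alpha)=|\mathrm{Des}(\alpha)|$ and $\mathrm{maj}(\alpha)=\sum_{i\in\mathrm{Des}(\alpha)} i$. The Gaussian polynomial is ${n \brack m}=\frac{(1-q^n)(1-q^{n-1})\cdots (1-q^{n-m+1})}{(1-q^m)(1-q^{m-1})\cdots (1-q)}$. For disjoint permutations $\pi=\pi_1\cdots\pi_n$ and $\delta=\delta_1\cdots\delta_m$, a shuffle of $\pi$ and $\delta$ is a permutation $\alpha=\alpha_1\cdots\alpha_{m+n}$ containing both $\pi$ and $\delta$ as subsequences. $\mathrm{Sh}_l(\pi,\delta)$ is the set of shuffles with $\alpha_1=\delta_1$; $\mathrm{Sh}_{ls}(\pi,\delta)$ is the set of shuffles with $\alpha_1=\delta_1$ and $\alpha_{n+m}=\delta_m$ (the last letter of $\delta$); $\mathrm{Sh}_{ll}(\pi,\delta)$ is the set of shuffles with $\alpha_1=\delta_1$ and $\alpha_2=\delta_2$. *)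

(* Defs.v *)
From HB Require Import structures.
From mathcomp Require Import all_boot all_order all_algebra.
Set Implicit Arguments. Unset Strict Implicit. Unset Printing Implicit Defensive.
Import Order.TTheory GRing.Theory Num.Theory.

(* Words ("permutations" in the paper's sense) are sequences of integers. *)

(* Descent set, 1-indexed: i \in Des a  iff  a_i > a_{i+1}. *)
Definition Des (a : seq int) : seq nat :=
  [seq i <- iota 1 (size a).-1 | (nth 0%R a i < nth 0%R a i.-1)%R].
Definition des (a : seq int) : nat := size (Des a).
Definition maj (a : seq int) : nat := sumn (Des a).

(* All shuffles of pi and delta: words of length |pi|+|delta| with distinct
   letters containing pi and delta as subsequences. For disjoint pi, delta
   these are exactly the rearrangements of pi ++ delta containing both as
   subsequences. *)
Definition Sh (pi delta : seq int) : seq (seq int) :=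
  [seq a <- permutations (pi ++ delta) | subseq pi a && subseq delta a].

Definition Sh_l (pi delta : seq int) : seq (seq int) :=
  [seq a <- Sh pi delta | nth 0%R a 0 == nth 0%R delta 0].
Definition Sh_ls (pi delta : seq int) : seq (seq int) :=
  [seq a <- Sh_l pi delta |
     nth 0%R a (size pi + size delta).-1 == nth 0%R delta (size delta).-1].
Definition Sh_ll (pi delta : seq int) : seq (seq int) :=
  [seq a <- Sh_l pi delta | nth 0%R a 1 == nth 0%R delta 1].

Definition RF := {fraction {poly int}}.
Definition qv : RF := tofrac 'X.

(* Gaussian polynomial [n brack k] for naturals n k, by the product formula
   (1-q^n)...(1-q^(n-k+1)) / ((1-q^k)...(1-q)); for k > n a factor 1-q^0 = 0
   appears, so it is 0. *)
Definition gauss (n k : nat) : RF :=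
  (\prod_(i < k) ((1 - qv ^+ (n - i)) / (1 - qv ^+ i.+1)))%R.

Definition gaussZ (n k : int) : RF :=
  match n, k with
  | Posz n', Posz k' => gauss n' k'
  | _, _ => 0%R
  end.

(* Main.v *)
Require Import Defs.
From mathcomp Require Import all_boot all_order all_algebra.
From mathcomp Require Import zify ring lra.
Import Order.TTheory GRing.Theory Num.Theory.
Set Implicit Arguments. Unset Strict Implicit. Unset Printing Implicit Defensive.
Local Open Scope ring_scope.

Lemma fld1 (F : fieldType) (a b c d e : F) : d != 0 -> e != 0 -> b != 0 -> c != 0 ->
  a / (b * (c * d)) * (d / e) = a / (b * e * c).
Proof. move=> *. field. by apply/and4P. Qed.

Lemma fld2 (F : fieldType) (a b c x y : F) : 1 - x != 0 -> 1 - y != 0 -> b != 0 -> c != 0 ->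
  a * (1 - x * y) / (b * (1 - x) * (c * (1 - y))) =
  a / (b * (1 - x) * c) + y * (a / (b * (c * (1 - y)))).
Proof. move=> *. field. by apply/and4P. Qed.

Lemma qv_neq0 : qv != 0.
Proof. by rewrite /qv tofrac_eq0 polyX_eq0. Qed.

Lemma qXn_neq1 (i : nat) : (0 < i)%N -> 1 - qv ^+ i != 0.
Proof.
move=> hi; rewrite subr_eq0 eq_sym /qv -tofracXn -tofrac1 tofrac_eq.
apply/eqP => /(congr1 (fun p : {poly int} => size p)).
by rewrite size_polyXn size_poly1; case: i hi.
Qed.

Definition qf (n : nat) : RF := \prod_(i < n) (1 - qv ^+ i.+1).

Lemma qf_neq0 n : qf n != 0.
Proof. by apply/prodf_neq0 => i _; apply: qXn_neq1. Qed.

Lemma qfS n : qf n.+1 = qf n * (1 - qv ^+ n.+1).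
Proof. by rewrite /qf big_ord_recr. Qed.

Lemma gaussS n k : gauss n k.+1 = gauss n k * ((1 - qv ^+ (n - k)) / (1 - qv ^+ k.+1)).
Proof. by rewrite /gauss big_ord_recr. Qed.

Lemma gauss0 n : gauss n 0 = 1.
Proof. by rewrite /gauss big_ord0. Qed.

Lemma gauss_gt n k : (n < k)%N -> gauss n k = 0.
Proof.
elim: k => // k IH; rewrite gaussS ltnS leq_eqVlt => /orP [/eqP -> | /IH ->].
  by rewrite subnn expr0 subrr mul0r mulr0.
by rewrite mul0r.
Qed.

Lemma gauss_qf n k : (k <= n)%N -> gauss n k = qf n / (qf k * qf (n - k)).
Proof.
elim: k => [|k IH] hk.
  by rewrite gauss0 subn0 /qf big_ord0 mul1r divff // qf_neq0.
rewrite gaussS IH ?(ltnW hk) // qfS.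
have -> : (n - k)%N = (n - k.+1).+1 by lia.
rewrite qfS.
have h1 := qXn_neq1 (ltn0Sn k).
have h2 := qXn_neq1 (ltn0Sn (n - k.+1)).
apply: fld1; [exact h2|exact h1|exact: qf_neq0|exact: qf_neq0].
Qed.

Lemma gauss_nn n : gauss n n = 1.
Proof. by rewrite gauss_qf // subnn /qf big_ord0 mulr1 divff // qf_neq0. Qed.

Lemma gauss_pascal n k :
  gauss n.+1 k.+1 = gauss n k.+1 + qv ^+ (n - k) * gauss n k.
Proof.
case: (ltngtP k n) => hk.
- have e1 : (k.+1 <= n.+1)%N by lia.
  have e2 : (k.+1 <= n)%N by lia.
  have e3 : (k <= n)%N by lia.
  rewrite (gauss_qf e1) (gauss_qf e2) (gauss_qf e3).
  have -> : (n.+1 - k.+1)%N = (n - k.+1).+1 by lia.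
  have -> : (n - k)%N = (n - k.+1).+1 by lia.
  rewrite !qfS.
  set b := (n - k.+1)%N.
  have -> : qv ^+ n.+1 = qv ^+ k.+1 * qv ^+ b.+1 by rewrite -exprD; congr (_ ^+ _); lia.
  have h1 := qXn_neq1 (ltn0Sn k).
  have h2 := qXn_neq1 (ltn0Sn b).
  apply: fld2; [exact h1|exact h2|exact: qf_neq0|exact: qf_neq0].
- by rewrite !gauss_gt // ?mulr0 ?addr0 // ltnW.
- by rewrite hk gauss_nn gauss_gt // subnn expr0 mul1r gauss_nn add0r.
Qed.

Lemma gZneg N (k : int) : k < 0 -> gaussZ N k = 0.
Proof. by case: N => // N; case: k. Qed.

Lemma gZnegN (N : int) k : N < 0 -> gaussZ N k = 0.
Proof. by case: N. Qed.

Lemma gZ_pascal (N : nat) (k : int) :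
  gaussZ N.+1%:Z (k + 1) = gaussZ N%:Z (k + 1) + qv ^ (N%:Z - k) * gaussZ N%:Z k.
Proof.
case: k => k.
- have -> : (Posz k + 1) = Posz k.+1 by lia.
  rewrite /= gauss_pascal; case: (leqP k N) => hk.
    by rewrite (subzn hk) exprnP.
  by rewrite (gauss_gt hk) !mulr0.
- case: k => [|k].
    have -> : (Negz 0 + 1) = 0 by [].
    by rewrite /= !gauss0 mulr0 addr0.
  have -> : (Negz k.+1 + 1) = Negz k by rewrite !NegzE; lia.
  by rewrite /= mulr0 addr0.
Qed.

Definition F1 (m n r s M : nat) (d : int) : RF :=
  gaussZ (m%:Z - r%:Z + s%:Z) (d - r%:Z)
  * gaussZ (n%:Z - s%:Z + r%:Z - 1) (d - s%:Z - 1)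
  * qv ^ (M%:Z + (d - s%:Z) * (d - r%:Z)).
Definition F2 (m n r s M : nat) (d : int) : RF :=
  gaussZ (m%:Z - r%:Z + s%:Z - 1) (d - r%:Z)
  * gaussZ (n%:Z - s%:Z + r%:Z - 1) (d - s%:Z - 1)
  * qv ^ (M%:Z + (d - s%:Z) * (d - r%:Z)).
Definition FP m n r s M d := F1 m n r s M d - F2 m n r s M d.

Lemma gZc (N1 N2 k1 k2 : int) : N1 = N2 -> k1 = k2 -> gaussZ N1 k1 = gaussZ N2 k2.
Proof. by move=> -> ->. Qed.

Lemma qz (a b : int) : a = b -> qv ^ a = qv ^ b.
Proof. by move=> ->. Qed.

Lemma qzD (a b : int) : qv ^ (a + b) = qv ^ a * qv ^ b.
Proof. exact: expfzDr qv_neq0. Qed.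

Lemma qmerge (a b c d : int) : a + b = c + d -> qv ^ a * qv ^ b = qv ^ c * qv ^ d.
Proof. by rewrite -!qzD => ->. Qed.

Lemma idA1 (m' n r' s M : nat) (d : int) :
  (r' < m')%N -> (s < n)%N ->
  F2 m'.+1 n r'.+1 s (M + m') d =
  qv ^+ (m' + n) * F2 m' n r' s M (d - 1) + FP m' n r' s M d.
Proof.
move=> hr hs; rewrite /FP /F1 /F2.
set N := (m' - r' + s - 1)%N.
set B0 := (n - s + r' - 1)%N.
set e := d - r'.+1%:Z.
set g := d - s%:Z - 1.
have PN := gZ_pascal N e.
have PB := gZ_pascal B0 (g - 1).
rewrite (_ : g - 1 + 1 = g) in PB; last by ring.
rewrite (@gZc _ N%:Z _ e); [|lia|lia].
rewrite (@gZc (n%:Z - s%:Z + r'.+1%:Z - 1) B0.+1%:Z _ g); [|lia|lia].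
rewrite (@gZc (m'%:Z - r'%:Z + s%:Z - 1) N%:Z (d - 1 - r'%:Z) e); [|lia|lia].
rewrite (@gZc (n%:Z - s%:Z + r'%:Z - 1) B0%:Z (d - 1 - s%:Z - 1) (g - 1)); [|lia|lia].
rewrite (@gZc (m'%:Z - r'%:Z + s%:Z) N.+1%:Z (d - r'%:Z) (e + 1)); [|lia|lia].
rewrite (@gZc (m'%:Z - r'%:Z + s%:Z - 1) N%:Z (d - r'%:Z) (e + 1)); [|lia|lia].
rewrite (@gZc (n%:Z - s%:Z + r'%:Z - 1) B0%:Z g g); [|lia|lia].
rewrite PN PB.
set X := gaussZ N e. set Y0 := gaussZ B0 g. set Y1 := gaussZ B0 (g - 1).
set Z := gaussZ N (e + 1).
have h1 : qv ^ ((M + m')%N%:Z + (d - s%:Z) * e) = qv ^ (N%:Z - e) * qv ^ (M%:Z + (d - s%:Z) * (d - r'%:Z)).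
  rewrite -qzD; apply: qz; rewrite /e; nia.
have h2 : qv ^ (B0%:Z - (g - 1)) * qv ^ ((M + m')%N%:Z + (d - s%:Z) * e) = qv ^+ (m' + n) * qv ^ (M%:Z + (d - 1 - s%:Z) * (d - 1 - r'%:Z)).
  rewrite exprnP; apply: qmerge; rewrite /e /g; nia.
transitivity (X * Y0 * qv ^ ((M + m')%N%:Z + (d - s%:Z) * e) + X * Y1 * (qv ^ (B0%:Z - (g - 1)) * qv ^ ((M + m')%N%:Z + (d - s%:Z) * e))); first ring.
rewrite h2 h1; ring.
Qed.

Lemma idA2 (m' n r s M : nat) (d : int) :
  F2 m'.+1 n r s M d = F2 m' n r s M d + FP m' n r s M d.
Proof.
rewrite /FP /F1 /F2.
rewrite (@gZc (m'.+1%:Z - r%:Z + s%:Z - 1) (m'%:Z - r%:Z + s%:Z) (d - r%:Z) (d - r%:Z)); [|lia|lia].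
ring.
Qed.

Lemma idA3 (m n' r s' M : nat) (d : int) :
  (r <= m)%N ->
  FP m n'.+1 r s'.+1 (M + n') d =
  qv ^+ (m + n') * (F2 m n' r s' M (d - 1) + FP m n' r s' M (d - 1)).
Proof.
move=> hr; rewrite /FP /F1 /F2.
set N := (m - r + s')%N.
set e := d - r%:Z.
have PN := gZ_pascal N (e - 1).
rewrite (_ : e - 1 + 1 = e) in PN; last by ring.
rewrite (@gZc (m%:Z - r%:Z + s'.+1%:Z) N.+1%:Z (d - r%:Z) e); [|lia|lia].
rewrite (@gZc (m%:Z - r%:Z + s'.+1%:Z - 1) N%:Z (d - r%:Z) e); [|lia|lia].
rewrite (@gZc (n'.+1%:Z - s'.+1%:Z + r%:Z - 1) (n'%:Z - s'%:Z + r%:Z - 1) (d - s'.+1%:Z - 1) (d - 1 - s'%:Z - 1)); [|lia|lia].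
rewrite (@gZc (m%:Z - r%:Z + s'%:Z) N%:Z (d - 1 - r%:Z) (e - 1)); [|lia|lia].
rewrite (@gZc (m%:Z - r%:Z + s'%:Z - 1) (N%:Z - 1) (d - 1 - r%:Z) (e - 1)); [|lia|lia].
rewrite PN.
set X := gaussZ N (e - 1). set Y := gaussZ _ (d - 1 - s'%:Z - 1).
have h1 : qv ^ (N%:Z - (e - 1)) * qv ^ ((M + n')%N%:Z + (d - s'.+1%:Z) * (d - r%:Z)) =
   qv ^+ (m + n') * qv ^ (M%:Z + (d - 1 - s'%:Z) * (d - 1 - r%:Z)).
  rewrite exprnP; apply: qmerge; rewrite /e; nia.
transitivity (X * Y * (qv ^ (N%:Z - (e - 1)) * qv ^ ((M + n')%N%:Z + (d - s'.+1%:Z) * (d - r%:Z)))); first ring.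
rewrite h1; ring.
Qed.

Lemma idA4 (m n' r s M : nat) (d : int) :
  (r < m)%N -> (s < n')%N ->
  FP m n'.+1 r s M d =
  qv ^+ (m + n') * F2 m n' r s M (d - 1) + FP m n' r s M d.
Proof.
move=> hr hs; rewrite /FP /F1 /F2.
set N := (m - r + s - 1)%N.
set B0 := (n' - s + r - 1)%N.
set e := d - r%:Z.
set g := d - s%:Z - 1.
have PN := gZ_pascal N (e - 1).
rewrite (_ : e - 1 + 1 = e) in PN; last by ring.
have PB := gZ_pascal B0 (g - 1).
rewrite (_ : g - 1 + 1 = g) in PB; last by ring.
rewrite (@gZc (m%:Z - r%:Z + s%:Z) N.+1%:Z (d - r%:Z) e); [|lia|lia].
rewrite (@gZc (m%:Z - r%:Z + s%:Z - 1) N%:Z (d - r%:Z) e); [|lia|lia].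
rewrite (@gZc (n'.+1%:Z - s%:Z + r%:Z - 1) B0.+1%:Z g g); [|lia|lia].
rewrite (@gZc (m%:Z - r%:Z + s%:Z - 1) N%:Z (d - 1 - r%:Z) (e - 1)); [|lia|lia].
rewrite (@gZc (n'%:Z - s%:Z + r%:Z - 1) B0%:Z (d - 1 - s%:Z - 1) (g - 1)); [|lia|lia].
rewrite (@gZc (n'%:Z - s%:Z + r%:Z - 1) B0%:Z g g); [|lia|lia].
rewrite PN PB.
set X := gaussZ N (e - 1). set Y0 := gaussZ B0 g. set Y1 := gaussZ B0 (g - 1).
have h1 : qv ^ (N%:Z - (e - 1)) * (qv ^ (B0%:Z - (g - 1)) * qv ^ (M%:Z + (d - s%:Z) * (d - r%:Z))) =
   qv ^+ (m + n') * qv ^ (M%:Z + (d - 1 - s%:Z) * (d - 1 - r%:Z)).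
  rewrite exprnP -!qzD; apply: qz; rewrite /e /g; nia.
transitivity (X * Y0 * qv ^ (N%:Z - (e - 1)) * qv ^ (M%:Z + (d - s%:Z) * (d - r%:Z)) + X * Y1 * (qv ^ (N%:Z - (e - 1)) * (qv ^ (B0%:Z - (g - 1)) * qv ^ (M%:Z + (d - s%:Z) * (d - r%:Z))))); first ring.
rewrite h1; ring.
Qed.

Lemma gZnat (N k : nat) : gaussZ N%:Z k%:Z = gauss N k.
Proof. by []. Qed.

Lemma idB1 (m r M d : nat) : (r < m)%N ->
  FP m 1 r 0 M d%:Z = if d == r.+1 then qv ^+ (M + m) else 0.
Proof.
move=> hr; rewrite /FP /F1 /F2.
case: (eqVneq d r.+1) => [->|hne].
  have PN := gZ_pascal (m - r - 1)%N 0.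
  rewrite (@gZc _ (m - r - 1)%N.+1%:Z _ (0 + 1)); [|lia|lia].
  rewrite (@gZc (m%:Z - r%:Z + 0%:Z - 1) (m - r - 1)%N%:Z _ (0 + 1)); [|lia|lia].
  rewrite PN.
  rewrite (@gZc (1%:Z - 0%:Z + r%:Z - 1) r%N%:Z _ r%N%:Z); [|lia|lia].
  rewrite (gZnat r r) gauss_nn (gZnat (m - r - 1) 0) gauss0 ?eqxx.
  rewrite exprnP.
  have h : qv ^ ((m - r - 1)%N%:Z - 0%N%:Z) * qv ^ (M%:Z + (r.+1%:Z - 0%:Z) * (r.+1%:Z - r%:Z)) = qv ^ ((M + m)%N%:Z) * qv ^ 0.
    apply: qmerge; lia.
  rewrite expr0z mulr1 in h. rewrite -h. ring.
rewrite ?(negbTE hne).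
case: (ltngtP d r.+1) => hd.
- rewrite ltnS leq_eqVlt in hd; case/orP: hd => [/eqP -> | hd].
    rewrite (@gZc _ (m - r)%N%:Z _ 0%N%:Z); [|lia|lia].
    rewrite (@gZc (m%:Z - r%:Z + 0%:Z - 1) (m - r - 1)%N%:Z _ 0%N%:Z); [|lia|lia].
    rewrite !gZnat !gauss0. ring.
  have hneg : d%:Z - r%:Z < 0 by lia.
  rewrite !(gZneg _ hneg) !mul0r. ring.
- rewrite (@gZc (1%:Z - 0%:Z + r%:Z - 1) r%N%:Z _ (d.-1)%N%:Z); [|lia|lia].
  rewrite gZnat (@gauss_gt r d.-1); last lia.
  ring.
- by rewrite hd eqxx in hne.
Qed.

Lemma idB2 (n s M : nat) (d : int) : (s < n)%N -> F2 1 n 0 s M d = 0.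
Proof.
move=> hs; rewrite /F2.
case: (ltP (s%:Z) d) => hd.
  rewrite (@gZc _ s%N%:Z _ d); [|lia|lia].
  case: d hd => [d|d] hd; last by rewrite /= !mul0r.
  rewrite gZnat gauss_gt; last lia.
  by rewrite !mul0r.
rewrite (@gZneg _ (d - s%:Z - 1)); last lia.
by rewrite mulr0 mul0r.
Qed.

Lemma idA5 (m' n r s M d : nat) :
  qv ^+ d * F1 m' n r s M d%:Z =
  gaussZ (m'.+1%:Z - r%:Z + s%:Z - 1) (d%:Z - r%:Z)
  * gaussZ (n%:Z - s%:Z + r%:Z - 1) (d%:Z - s%:Z - 1)
  * qv ^ ((M + r)%N%:Z + (d%:Z - s%:Z + 1) * (d%:Z - r%:Z)).
Proof.
rewrite /F1.
rewrite (@gZc (m'%:Z - r%:Z + s%:Z) (m'.+1%:Z - r%:Z + s%:Z - 1) _ (d%:Z - r%:Z)); [|lia|lia].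
have h : qv ^ d%:Z * qv ^ (M%:Z + (d%:Z - s%:Z) * (d%:Z - r%:Z)) = qv ^ ((M + r)%N%:Z + (d%:Z - s%:Z + 1) * (d%:Z - r%:Z)) * qv ^ 0.
  apply: qmerge; nia.
rewrite expr0z mulr1 in h. rewrite exprnP -h. ring.
Qed.

Local Close Scope ring_scope.

Fixpoint ileave (w : seq bool) (x y : seq int) : seq int :=
  if w is b :: w' then
    (if b then head 0%R x :: ileave w' (behead x) y
     else head 0%R y :: ileave w' x (behead y))
  else [::].

Fixpoint W (m n : nat) {struct m} : seq (seq bool) :=
  if m is m'.+1 then
    (fix Wm n := if n is n'.+1 then
        [seq rcons w true | w <- W m' n'.+1] ++ [seq rcons w false | w <- Wm n']
      else [:: nseq m'.+1 true]) n
  else [:: nseq n false].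

Lemma W_SS m n : W m.+1 n.+1 =
  [seq rcons w true | w <- W m n.+1] ++ [seq rcons w false | w <- W m.+1 n].
Proof. by []. Qed.
Lemma W_S0 m : W m.+1 0 = [:: nseq m.+1 true]. Proof. by []. Qed.
Lemma W_0 n : W 0 n = [:: nseq n false]. Proof. by []. Qed.

Lemma size_ileave w x y : size (ileave w x y) = size w.
Proof. by elim: w x y => //= b w IH x y; case: b => /=; rewrite IH. Qed.

Lemma count_rcons (T : Type) (p : pred T) s a : count p (rcons s a) = count p s + p a.
Proof. by rewrite -cats1 count_cat /= addn0. Qed.

Lemma ileave_rcons w x y a :
  count id w = size x -> count negb w = size y ->
  ileave (rcons w true) (rcons x a) y = rcons (ileave w x y) a.
Proof.
elim: w x y => [|b w IH] x y /=.
  by case: x => // _; case: y.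
case: b => /=.
  case: x => // c x [hx] hy; by rewrite IH.
case: y => // c y hx [hy]; by rewrite IH.
Qed.

Lemma ileave_rconsF w x y a :
  count id w = size x -> count negb w = size y ->
  ileave (rcons w false) x (rcons y a) = rcons (ileave w x y) a.
Proof.
elim: w x y => [|b w IH] x y /=.
  by case: x => // _; case: y.
case: b => /=.
  case: x => // c x [hx] hy; by rewrite IH.
case: y => // c y hx [hy]; by rewrite IH.
Qed.

Lemma count_size_bool (w : seq bool) : count id w + count negb w = size w.
Proof. by elim: w => //= b w IH; case: b; rewrite /= ?add0n ?addn0 -IH ?addnS ?addSn. Qed.

Lemma nseq_count0 (w : seq bool) : count id w = 0%N -> w = nseq (size w) false.
Proof. by elim: w => //= b w IH; case: b => //= /IH <-. Qed.

Lemma nseq_countN0 (w : seq bool) : count negb w = 0%N -> w = nseq (size w) true.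
Proof. by elim: w => //= b w IH; case: b => //= /IH <-. Qed.

Lemma count_nseq_b (b : bool) k : count id (nseq k b) = (b * k)%N /\ count negb (nseq k b) = ((~~ b) * k)%N.
Proof. by rewrite !count_nseq. Qed.

Lemma memW m n w : (w \in W m n) = (count id w == m) && (count negb w == n).
Proof.
elim: m n w => [|m IHm] n w.
  rewrite W_0 inE; apply/eqP/andP => [->|[/eqP h0 /eqP h1]].
    by have [-> ->] := count_nseq_b false n; rewrite mul1n.
  rewrite (nseq_count0 h0) -count_size_bool h0 h1 //.
elim: n w => [|n IHn] w.
  rewrite W_S0 inE; apply/eqP/andP => [->|[/eqP h0 /eqP h1]].
    by have [-> ->] := count_nseq_b true m.+1; rewrite mul1n.
  rewrite (nseq_countN0 h1) -count_size_bool h0 h1 addn0 //.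
rewrite W_SS mem_cat.
case/lastP: w => [|w b].
  by apply/negbTE/orP => -[] /mapP [u _]; case: u.
rewrite !count_rcons.
have inj1 : injective (fun u : seq bool => rcons u true).
  by move=> u v /eqP; rewrite eqseq_rcons eqxx andbT => /eqP.
have inj0 : injective (fun u : seq bool => rcons u false).
  by move=> u v /eqP; rewrite eqseq_rcons eqxx andbT => /eqP.
case: b => /=.
  rewrite (mem_map inj1) IHm.
  have -> : (rcons w true \in [seq rcons w0 false | w0 <- W m.+1 n]) = false.
    by apply/negbTE/mapP => [[u _] /eqP]; rewrite eqseq_rcons andbF.
  rewrite orbF addn1 addn0 eqSS //.
rewrite (mem_map inj0) IHn.
have -> : (rcons w false \in [seq rcons w0 true | w0 <- W m n.+1]) = false.
  by apply/negbTE/mapP => [[u _] /eqP]; rewrite eqseq_rcons andbF.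
by rewrite addn1 addn0 eqSS.
Qed.

Lemma uniqW m n : uniq (W m n).
Proof.
elim: m n => [|m IHm] n; first by rewrite W_0.
elim: n => [|n IHn]; first by rewrite W_S0.
have inj1 : injective (fun u : seq bool => rcons u true).
  by move=> u v /eqP; rewrite eqseq_rcons eqxx andbT => /eqP.
have inj0 : injective (fun u : seq bool => rcons u false).
  by move=> u v /eqP; rewrite eqseq_rcons eqxx andbT => /eqP.
rewrite W_SS cat_uniq (map_inj_uniq inj1) (map_inj_uniq inj0) IHm IHn /= andbT.
apply/hasP => -[w /mapP [u _ ->] /mapP [v _] /eqP].
by rewrite eqseq_rcons andbF.
Qed.

Lemma Des_rcons (a : seq int) x : a != [::] ->
  Des (rcons a x) = Des a ++ (if (x < last 0 a)%R then [:: size a] else [::]).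
Proof.
move=> ha; rewrite /Des size_rcons /=.
have hk : size a = (size a).-1.+1 by case: (a) ha.
rewrite {1}hk -[(size a).-1.+1]addn1 iotaD filter_cat; congr (_ ++ _).
  apply: eq_in_filter => i; rewrite mem_iota => /andP [h1 h2].
  rewrite !nth_rcons (_ : (i < size a)%N = true); last lia.
  by rewrite (_ : (i.-1 < size a)%N = true) //; lia.
rewrite add1n -hk /= nth_rcons ltnn eqxx nth_rcons.
rewrite (_ : ((size a).-1 < size a)%N = true); last lia.
by rewrite nth_last.
Qed.

Lemma des_rcons (a : seq int) x : a != [::] ->
  des (rcons a x) = (des a + (x < last 0 a)%R)%N.
Proof. by move=> ha; rewrite /des Des_rcons // size_cat; case: ifP. Qed.

Lemma maj_rcons (a : seq int) x : a != [::] ->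
  maj (rcons a x) = (maj a + (x < last 0 a)%R * size a)%N.
Proof.
move=> ha; rewrite /maj Des_rcons // sumn_cat; case: ifP => _ /=; lia.
Qed.

Lemma sumn_succ (l : seq nat) : sumn (map succn l) = (sumn l + size l)%N.
Proof. elim: l => //= a l ->; lia. Qed.

Lemma Des_cons (a : seq int) x : a != [::] ->
  Des (x :: a) = (if (head 0 a < x)%R then [:: 1%N] else [::]) ++ map succn (Des a).
Proof.
move=> ha; rewrite /Des /=.
have hk : size a = (size a).-1.+1 by case: (a) ha.
rewrite {1}hk /=.
rewrite (_ : iota 2 _ = map succn (iota 1 (size a).-1)); last first.
  by rewrite -[2%N]/(1+1)%N iotaDl; apply: eq_map => i; rewrite add1n.
rewrite filter_map.
have -> : [seq i <- iota 1 (size a).-1 | preim succn (fun i => ((x :: a)`_i < (x :: a)`_i.-1)%R) i]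
   = [seq i <- iota 1 (size a).-1 | (a`_i < a`_i.-1)%R].
  apply: eq_in_filter => i; rewrite mem_iota => /andP [h1 h2] /=.
  by case: i h1 h2.
by rewrite nth0; case: ifP.
Qed.

Lemma des_cons (a : seq int) x : a != [::] ->
  des (x :: a) = ((head 0 a < x)%R + des a)%N.
Proof. by move=> ha; rewrite /des Des_cons // size_cat size_map; case: ifP. Qed.

Lemma maj_cons (a : seq int) x : a != [::] ->
  maj (x :: a) = ((head 0 a < x)%R + maj a + des a)%N.
Proof.
move=> ha; rewrite /maj /des Des_cons // sumn_cat sumn_succ; case: ifP => _ /=; lia.
Qed.

Lemma des_le (a : seq int) : (des a <= (size a).-1)%N.
Proof. by rewrite /des /Des size_filter (leq_trans (count_size _ _)) // size_iota. Qed.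

Lemma last_ileave w x y :
  count id w = size x -> count negb w = size y -> w != [::] ->
  last 0%R (ileave w x y) = if last false w then last 0%R x else last 0%R y.
Proof.
case/lastP: w => // w b; rewrite !count_rcons last_rcons => hx hy _.
case: b hx hy => /= hx hy.
  case/lastP: x hx => [|x a]; first by rewrite /=; lia.
  rewrite size_rcons => hx.
  by rewrite ileave_rcons ?last_rcons //; lia.
case/lastP: y hy => [|y a]; first by rewrite /=; lia.
rewrite size_rcons => hy.
by rewrite ileave_rconsF ?last_rcons //; lia.
Qed.

Local Open Scope ring_scope.

Definition GD (x y : seq int) (d : nat) : RF :=
  \sum_(w <- W (size x) (size y))
     (if [&& head false w, last false w & des (ileave w x y) == d]
      then qv ^+ maj (ileave w x y) else 0).
Definition GP (x y : seq int) (d : nat) : RF :=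
  \sum_(w <- W (size x) (size y))
     (if [&& head false w, ~~ last false w & des (ileave w x y) == d]
      then qv ^+ maj (ileave w x y) else 0).

Lemma sum_false (s : seq (seq bool)) (P : seq bool -> bool) (F : seq bool -> RF) :
  (forall w, P w = false) -> \sum_(w <- s) (if P w then F w else 0) = 0.
Proof. by move=> hP; apply: big1 => w _; rewrite hP. Qed.

Lemma head_rcons_b (w : seq bool) b : w != [::] -> head false (rcons w b) = head false w.
Proof. by case: w. Qed.

Lemma GD_rcons (dl : seq int) (x : int) (p : seq int) d :
  dl != [::] -> p != [::] -> (last 0 p < x)%R ->
  GD (rcons dl x) p d =
  (if (x < last 0 dl)%R then
     (if d is d'.+1 then qv ^+ (size dl + size p) * GD dl p d' else 0)
   else GD dl p d) + GP dl p d.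
Proof.
move=> hdl hp hx; rewrite /GD /GP size_rcons.
case hn: (size p) => [|n']; first by move: hp; rewrite -size_eq0 hn.
rewrite W_SS big_cat !big_map.
rewrite [X in _ + X = _]sum_false; last by move=> w; rewrite last_rcons andbF.
rewrite addr0.
have key : forall w, w \in W (size dl) n'.+1 ->
  [/\ ileave (rcons w true) (rcons dl x) p = rcons (ileave w dl p) x,
      head false (rcons w true) = head false w,
      ileave w dl p != [::],
      size (ileave w dl p) = (size dl + size p)%N &
      last 0 (ileave w dl p) = if last false w then last 0 dl else last 0 p].
  move=> w; rewrite memW => /andP [/eqP h1 /eqP h2].
  have hw : w != [::] by apply/eqP => hw; move: h2; rewrite hw /=.
  split.
  - by rewrite ileave_rcons // h2 hn.
  - exact: head_rcons_b.
  - by rewrite -size_eq0 size_ileave size_eq0.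
  - by rewrite size_ileave -count_size_bool h1 h2 hn.
  - by rewrite last_ileave // h2 hn.
have hpx : (x < last 0 p)%R = false by apply/negbTE; rewrite -leNgt ltW.
case hc: (x < last 0 dl)%R.
  case: d => [|d].
    rewrite add0r; apply: eq_big_seq => w hw.
    have [e1 e2 e3 e4 e5] := key w hw.
    rewrite e1 e2 (des_rcons _ e3) (maj_rcons _ e3) e5 e4 last_rcons.
    by case hl: (last false w); rewrite ?hc ?hpx /= ?addn1 ?addn0 ?muln0 ?mul1n ?andbF.
  rewrite mulr_sumr -big_split; apply: eq_big_seq => w hw.
  have [e1 e2 e3 e4 e5] := key w hw.
  rewrite e1 e2 (des_rcons _ e3) (maj_rcons _ e3) e5 e4 last_rcons.
  case hl: (last false w); rewrite ?hc ?hpx /= ?addn1 ?addn0 ?muln0 ?mul1n ?andbF ?eqSS.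
    by case: ifP => _; rewrite ?exprD ?hn; ring.
  by rewrite mulr0 add0r.
rewrite -big_split; apply: eq_big_seq => w hw.
have [e1 e2 e3 e4 e5] := key w hw.
rewrite e1 e2 (des_rcons _ e3) (maj_rcons _ e3) e5 e4 last_rcons.
case hl: (last false w); rewrite ?hc ?hpx /= ?addn1 ?addn0 ?muln0 ?mul1n ?andbF ?eqSS.
  by rewrite addr0.
by rewrite add0r.
Qed.

Lemma GP_rcons (dl p : seq int) (y : int) d :
  dl != [::] -> p != [::] -> (y < last 0 dl)%R ->
  GP dl (rcons p y) d =
  (if d is d'.+1 then qv ^+ (size dl + size p) * GD dl p d' else 0) +
  (if (y < last 0 p)%R then
     (if d is d'.+1 then qv ^+ (size dl + size p) * GP dl p d' else 0)
   else GP dl p d).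
Proof.
move=> hdl hp hy; rewrite /GD /GP size_rcons.
case hm: (size dl) => [|m']; first by move: hdl; rewrite -size_eq0 hm.
rewrite W_SS big_cat !big_map.
rewrite [X in X + _ = _]sum_false; last by move=> w; rewrite last_rcons andbF.
rewrite add0r.
have key : forall w, w \in W m'.+1 (size p) ->
  [/\ ileave (rcons w false) dl (rcons p y) = rcons (ileave w dl p) y,
      head false (rcons w false) = head false w,
      ileave w dl p != [::],
      size (ileave w dl p) = (size dl + size p)%N &
      last 0 (ileave w dl p) = if last false w then last 0 dl else last 0 p].
  move=> w; rewrite memW => /andP [/eqP h1 /eqP h2].
  have hw : w != [::].
    apply/eqP => hw; move: h1; rewrite hw /=; lia.
  split.
  - by rewrite ileave_rconsF // h1 hm.
  - exact: head_rcons_b.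
  - by rewrite -size_eq0 size_ileave size_eq0.
  - by rewrite size_ileave -count_size_bool h1 h2 hm.
  - by rewrite last_ileave // h1 hm.
case hc: (y < last 0 p)%R.
  case: d => [|d].
    rewrite addr0; apply: big1_seq => w /andP [_ hw].
    have [e1 e2 e3 e4 e5] := key w hw.
    rewrite e1 e2 (des_rcons _ e3) (maj_rcons _ e3) e5 e4 last_rcons.
    case hl: (last false w); rewrite ?hc ?hy /= ?addn1 ?addn0 ?muln0 ?mul1n ?andbF ?eqSS;
      (try case: ifP => _); rewrite ?exprD ?hm; ring.
  rewrite !mulr_sumr -big_split; apply: eq_big_seq => w hw.
  have [e1 e2 e3 e4 e5] := key w hw.
  rewrite e1 e2 (des_rcons _ e3) (maj_rcons _ e3) e5 e4 last_rcons.
  case hl: (last false w); rewrite ?hc ?hy /= ?addn1 ?addn0 ?muln0 ?mul1n ?andbF ?eqSS;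
    (try case: ifP => _); rewrite ?exprD ?hm; ring.
case: d => [|d].
  rewrite add0r; apply: eq_big_seq => w hw.
  have [e1 e2 e3 e4 e5] := key w hw.
  rewrite e1 e2 (des_rcons _ e3) (maj_rcons _ e3) e5 e4 last_rcons.
  case hl: (last false w); rewrite ?hc ?hy /= ?addn1 ?addn0 ?muln0 ?mul1n ?andbF ?eqSS;
    (try case: ifP => _); rewrite ?exprD ?hm; ring.
rewrite !mulr_sumr -big_split; apply: eq_big_seq => w hw.
have [e1 e2 e3 e4 e5] := key w hw.
rewrite e1 e2 (des_rcons _ e3) (maj_rcons _ e3) e5 e4 last_rcons.
case hl: (last false w); rewrite ?hc ?hy /= ?addn1 ?addn0 ?muln0 ?mul1n ?andbF ?eqSS;
  (try case: ifP => _); rewrite ?exprD ?hm; ring.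
Qed.


Lemma ileave_nseq (dl : seq int) : ileave (nseq (size dl) true) dl [::] = dl.
Proof. by elim: dl => //= a dl ->. Qed.

Lemma GP_base (dl : seq int) (y : int) d :
  dl != [::] -> (y < last 0 dl)%R ->
  GP dl [:: y] d = if d == (des dl).+1 then qv ^+ (maj dl + size dl) else 0.
Proof.
move=> hdl hy; rewrite /GP /=.
case hm: (size dl) => [|m']; first by move: hdl; rewrite -size_eq0 hm.
rewrite W_SS big_cat !big_map.
rewrite [X in X + _ = _]sum_false; last by move=> w; rewrite last_rcons andbF.
rewrite add0r W_S0 big_seq1.
have -> : ileave (rcons (nseq m'.+1 true) false) dl [:: y] = rcons dl y.
  rewrite -[[:: y]]/(rcons [::] y) ileave_rconsF.
    by rewrite -hm ileave_nseq.
    by rewrite count_nseq mul1n hm.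
  by rewrite count_nseq mul0n.
rewrite last_rcons /= (des_rcons _ hdl) (maj_rcons _ hdl) hy hm addn1 mul1n eq_sym.
reflexivity.
Qed.

Lemma GD_base (x : int) (p : seq int) d :
  p != [::] -> GD [:: x] p d = 0.
Proof.
move=> hp; rewrite /GD [size [:: x]]/=.
case hn: (size p) => [|n']; first by move: hp; rewrite -size_eq0 hn.
rewrite W_SS big_cat !big_map W_0 big_seq1.
rewrite [X in _ + X = _]sum_false; last by move=> w; rewrite last_rcons andbF.
rewrite addr0 /=. reflexivity.
Qed.

Lemma mem_last0 (s : seq int) : s != [::] -> last 0 s \in s.
Proof. by case: s => // a s _; rewrite /= mem_last. Qed.

Lemma des_lt (s : seq int) : s != [::] -> (des s < size s)%N.
Proof. by move=> hs; have := des_le s; case: s hs => //= a s _; rewrite ltnS. Qed.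

Lemma F2neg m n r s M d : d < 0 -> F2 m n r s M d = 0.
Proof. by move=> hd; rewrite /F2 (@gZneg _ (d - r%:Z)) ?mul0r //; lia. Qed.
Lemma F1neg m n r s M d : d < 0 -> F1 m n r s M d = 0.
Proof. by move=> hd; rewrite /F1 (@gZneg _ (d - r%:Z)) ?mul0r //; lia. Qed.
Lemma FPneg m n r s M d : d < 0 -> FP m n r s M d = 0.
Proof. by move=> hd; rewrite /FP F1neg // F2neg // subrr. Qed.

Lemma main (p : seq int) : p != [::] ->
  forall dl, dl != [::] -> (forall a b, a \in dl -> b \in p -> (b < a)%R) ->
  forall d : nat,
  GD dl p d = F2 (size dl) (size p) (des dl) (des p) (maj dl + maj p) d%:Z /\
  GP dl p d = FP (size dl) (size p) (des dl) (des p) (maj dl + maj p) d%:Z.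
Proof.
elim/last_ind: p => [//|p y IHp] _.
have HP : forall dl, dl != [::] ->
    (forall a b, a \in dl -> b \in rcons p y -> (b < a)%R) -> forall d : nat,
    GP dl (rcons p y) d =
    FP (size dl) (size (rcons p y)) (des dl) (des (rcons p y)) (maj dl + maj (rcons p y)) d%:Z.
  move=> dl hdl H d.
  have hy : (y < last 0 dl)%R.
    by apply: H; [exact: mem_last0 | rewrite mem_rcons mem_head].
  case hp: (p == [::]).
    move/eqP: hp => ->; rewrite /= GP_base // idB1 ?addn0 //; exact: des_lt.
  have hp' : p != [::] by rewrite hp.
  have H' : forall a b, a \in dl -> b \in p -> (b < a)%R.
    by move=> a b ha hb; apply: H => //; rewrite mem_rcons inE hb orbT.
  have IH := IHp hp' dl hdl H'.
  have hr := des_lt hdl. have hs := des_lt hp'.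
  rewrite GP_rcons // (des_rcons _ hp') (maj_rcons _ hp') size_rcons.
  case hc: (y < last 0 p)%R.
    rewrite addn1 mul1n.
    rewrite (_ : (maj dl + (maj p + size p))%N = ((maj dl + maj p) + size p)%N); last lia.
    rewrite idA3; last exact: ltnW.
    case: d => [|d].
      rewrite F2neg // FPneg //. ring.
    rewrite (_ : d.+1%:Z - 1 = d%:Z); last lia.
    have [-> ->] := IH d. ring.
  rewrite addn0 mul0n addn0 idA4 //.
  case: d => [|d].
    rewrite F2neg //. have [_ ->] := IH 0%N. ring.
  rewrite (_ : d.+1%:Z - 1 = d%:Z); last lia.
  have [-> _] := IH d. have [_ ->] := IH d.+1. reflexivity.
suff HD : forall dl, dl != [::] ->
    (forall a b, a \in dl -> b \in rcons p y -> (b < a)%R) -> forall d : nat,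
    GD dl (rcons p y) d =
    F2 (size dl) (size (rcons p y)) (des dl) (des (rcons p y)) (maj dl + maj (rcons p y)) d%:Z.
  by move=> dl hdl H d; split; [apply: HD | apply: HP].
have hP : rcons p y != [::] by case: (p).
have hs := des_lt hP.
elim/last_ind => [//|dl x IHd] _ H d.
have hx : (last 0 (rcons p y) < x)%R.
  by apply: H; [rewrite mem_rcons mem_head | exact: mem_last0].
case hdl: (dl == [::]).
  move/eqP: hdl => ->; rewrite GD_base // idB2 //.
have hdl' : dl != [::] by rewrite hdl.
have H' : forall a b, a \in dl -> b \in rcons p y -> (b < a)%R.
  by move=> a b ha hb; apply: H => //; rewrite mem_rcons inE ha orbT.
have IH := IHd hdl' H'.
have HP' := HP dl hdl' H'.
have hr := des_lt hdl'.
rewrite GD_rcons // (des_rcons _ hdl') (maj_rcons _ hdl') (size_rcons dl x).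
case hc: (x < last 0 dl)%R.
  rewrite addn1 mul1n.
  rewrite (_ : (maj dl + size dl + maj (rcons p y))%N = ((maj dl + maj (rcons p y)) + size dl)%N); last lia.
  rewrite idA1 //.
  case: d => [|d].
    rewrite F2neg // HP'. ring.
  rewrite (_ : d.+1%:Z - 1 = d%:Z); last lia.
  rewrite IH HP'. reflexivity.
rewrite addn0 mul0n addn0 idA2 IH HP'. reflexivity.
Qed.

Lemma ileave_split (T : pred int) (a : seq int) :
  a = ileave [seq T x | x <- a] (filter T a) (filter (predC T) a).
Proof. by elim: a => //= c a IH; case: (T c) => /=; rewrite -IH. Qed.

Lemma perm_ileave w x y : count id w = size x -> count negb w = size y ->
  perm_eq (ileave w x y) (x ++ y).
Proof.
elim: w x y => [|b w IH] x y /=.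
  by case: x => // _; case: y.
case: b => /=.
  case: x => // c x [hx] hy /=; by rewrite perm_cons IH.
case: y => // c y hx [hy] /=.
by apply/permP => q; rewrite /= count_cat /= (permP (IH _ _ hx hy)) count_cat addnCA.
Qed.

Lemma subseq_ileave_l w x y : count id w = size x -> count negb w = size y ->
  subseq x (ileave w x y).
Proof.
elim: w x y => [|b w IH] x y /=.
  by case: x.
case: b => /=.
  case: x => // c x [hx] hy /=; by rewrite eqxx IH.
case: y => // c y hx [hy] /=.
exact: (subseq_trans (IH _ _ hx hy) (subseq_cons _ _)).
Qed.

Lemma subseq_ileave_r w x y : count id w = size x -> count negb w = size y ->
  subseq y (ileave w x y).
Proof.
elim: w x y => [|b w IH] x y /=.
  by case: x => // _; case: y.
case: b => /=.
  case: x => // c x [hx] hy /=.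
  exact: (subseq_trans (IH _ _ hx hy) (subseq_cons _ _)).
case: y => // c y hx [hy] /=; by rewrite eqxx IH.
Qed.

Lemma map_ileave (D : seq int) w x y : count id w = size x -> count negb w = size y ->
  all (mem D) x -> all (predC (mem D)) y ->
  [seq z \in D | z <- ileave w x y] = w.
Proof.
elim: w x y => [|b w IH] x y /=.
  by [].
case: b => /=.
  case: x => // c x [hx] hy /andP [hc hxa] hya /=.
  by rewrite IH // (_ : (c \in D) = true).
case: y => // c y hx [hy] hxa /andP [hc hya] /=.
rewrite IH // (_ : (c \in D) = false) //; exact: negbTE.
Qed.

Lemma Sh_perm (p dl : seq int) : uniq dl -> uniq p -> (forall x, x \in p -> x \notin dl) ->
  perm_eq (Sh p dl) [seq ileave w dl p | w <- W (size dl) (size p)].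
Proof.
move=> udl up disj.
have hall1 : all (mem dl) dl by apply/allP.
have hall2 : all (predC (mem dl)) p by apply/allP => z /disj.
apply: uniq_perm.
- by rewrite /Sh filter_uniq // permutations_uniq.
- rewrite map_inj_in_uniq ?uniqW // => w1 w2.
  rewrite !memW => /andP [/eqP h1 /eqP h2] /andP [/eqP h3 /eqP h4] he.
  by rewrite -(map_ileave h1 h2 hall1 hall2) he (map_ileave h3 h4 hall1 hall2).
move=> a; rewrite /Sh mem_filter mem_permutations.
apply/idP/idP.
  case/andP => /andP [sp sd] pa.
  have ua : uniq a by rewrite (perm_uniq pa) cat_uniq up udl andbT; apply/hasP => -[z hz /disj]; rewrite hz.
  have e1 : [seq z <- a | z \in dl] = dl by move/(subseq_uniqP ua): sd => <-.
  have e2 : [seq z <- a | z \in p] = p by move/(subseq_uniqP ua): sp => <-.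
  have e3 : [seq z <- a | predC (mem dl) z] = [seq z <- a | z \in p].
    apply: eq_in_filter => z za /=.
    have : z \in p ++ dl by rewrite -(perm_mem pa).
    rewrite mem_cat; case/orP => hz.
      by rewrite hz (negbTE (disj _ hz)).
    rewrite hz /=; apply/esym/negbTE; apply/negP => /disj; by rewrite hz.
  apply/mapP; exists [seq z \in dl | z <- a].
    rewrite memW count_map -size_filter e1 eqxx /=.
    rewrite count_map (eq_count (a2 := predC (mem dl))) // -size_filter e3 e2 //.
  by rewrite {1}(ileave_split (mem dl) a) /= e1 e3 e2.
case/mapP => w; rewrite memW => /andP [/eqP h1 /eqP h2] ->.
rewrite (subseq_ileave_l h1 h2) (subseq_ileave_r h1 h2) /=.
by rewrite perm_sym perm_catC perm_sym perm_ileave.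
Qed.

Lemma sum_Sh (p dl : seq int) (P : pred (seq int)) (F : seq int -> RF) :
  uniq dl -> uniq p -> (forall x, x \in p -> x \notin dl) ->
  \sum_(a <- Sh p dl | P a) F a =
  \sum_(w <- W (size dl) (size p) | P (ileave w dl p)) F (ileave w dl p).
Proof. by move=> u1 u2 dj; rewrite (perm_big _ (Sh_perm u1 u2 dj)) big_map. Qed.

Lemma head_char (p dl : seq int) w : w \in W (size dl) (size p) ->
  dl != [::] -> p != [::] -> (forall x, x \in p -> x \notin dl) ->
  (nth 0 (ileave w dl p) 0 == nth 0 dl 0) = head false w.
Proof.
rewrite memW => /andP [/eqP h1 /eqP h2] hdl hp dj.
case: w h1 h2 => [|b w] /= h1 h2.
  by move: hdl; rewrite -size_eq0 -h1 eqxx.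
case: b h1 h2 => /= h1 h2; first by rewrite nth0 eqxx.
case: p hp dj h2 => // c p _ dj _ /=.
apply/negbTE/eqP => hc.
have := dj c (mem_head _ _); rewrite hc.
by case: (dl) hdl => //= e dl' _; rewrite mem_head.
Qed.

Lemma last_char (p dl : seq int) w : w \in W (size dl) (size p) ->
  dl != [::] -> p != [::] -> (forall x, x \in p -> x \notin dl) ->
  (nth 0 (ileave w dl p) (size p + size dl).-1 == nth 0 dl (size dl).-1) = last false w.
Proof.
rewrite memW => /andP [/eqP h1 /eqP h2] hdl hp dj.
have hw : w != [::].
  by apply/eqP => hw; move: hdl; rewrite -size_eq0 -h1 hw eqxx.
have -> : (size p + size dl)%N = size (ileave w dl p).
  by rewrite size_ileave -count_size_bool h1 h2 addnC.
rewrite !nth_last last_ileave //.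
case: (last false w); first by rewrite eqxx.
apply/negbTE/eqP => hc.
have := dj _ (mem_last0 hp); rewrite hc mem_last0 //.
Qed.

Lemma second_char (p dl : seq int) u : u \in W (size dl).-1 (size p) ->
  (1 < size dl)%N -> p != [::] -> (forall x, x \in p -> x \notin dl) ->
  (nth 0 (ileave (true :: u) dl p) 1 == nth 0 dl 1) = head false u.
Proof.
rewrite memW => /andP [/eqP h1 /eqP h2] hdl hp dj.
case: dl hdl dj h1 => // x0 [|x1 dl] // _ dj /= h1.
case: u h1 h2 => [|b u] /= h1 h2.
  by move: hp; rewrite -size_eq0 -h2 eqxx.
case: b h1 h2 => /= h1 h2; first by rewrite eqxx.
case: p hp dj h2 => // c p _ dj _ /=.
apply/negbTE/eqP => hc.
have := dj c (mem_head _ _); rewrite hc.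
by rewrite !inE eqxx orbT.
Qed.

Lemma W_head m n :
  perm_eq [seq w <- W m.+1 n | head false w] [seq true :: u | u <- W m n].
Proof.
apply: uniq_perm.
- by rewrite filter_uniq // uniqW.
- by rewrite map_inj_uniq ?uniqW // => u v [].
move=> w; rewrite mem_filter memW.
apply/idP/idP.
  case: w => [|b w] /=; first by [].
  case: b => //= /andP [/eqP h1 /eqP h2].
  apply/mapP; exists w => //; rewrite memW; apply/andP; split; apply/eqP; lia.
case/mapP => u; rewrite memW => /andP [/eqP h1 /eqP h2] -> /=.
by rewrite h1 h2 add1n !eqxx.
Qed.

Lemma head_ileave_t u (x y : seq int) : head false u -> head 0 (ileave u x y) = head 0 x.
Proof. by case: u => [|[] u]. Qed.

Theorem theorem3p5 (pi delta : seq int) (m n r s d : nat) :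
  size delta = m -> size pi = n ->
  uniq delta -> uniq pi ->
  (forall x, x \in pi -> x \notin delta) ->
  des delta = r -> des pi = s ->
  (2 <= m)%N -> (0 < n)%N ->
  (nth 0 delta 0 < nth 0 delta 1)%R ->
  (forall x y, x \in delta -> y \in pi -> (y < x)%R) ->
  [/\ (\sum_(a <- Sh_l pi delta | des a == d) qv ^+ maj a =
         gaussZ (m%:Z - r%:Z + s%:Z) (d%:Z - r%:Z)
       * gaussZ (n%:Z - s%:Z + r%:Z - 1) (d%:Z - s%:Z - 1)
       * qv ^ ((maj delta + maj pi)%:Z + (d%:Z - s%:Z) * (d%:Z - r%:Z)))%R,
      (\sum_(a <- Sh_ls pi delta | des a == d) qv ^+ maj a =
         gaussZ (m%:Z - r%:Z + s%:Z - 1) (d%:Z - r%:Z)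
       * gaussZ (n%:Z - s%:Z + r%:Z - 1) (d%:Z - s%:Z - 1)
       * qv ^ ((maj delta + maj pi)%:Z + (d%:Z - s%:Z) * (d%:Z - r%:Z)))%R &
      (\sum_(a <- Sh_ll pi delta | des a == d) qv ^+ maj a =
         gaussZ (m%:Z - r%:Z + s%:Z - 1) (d%:Z - r%:Z)
       * gaussZ (n%:Z - s%:Z + r%:Z - 1) (d%:Z - s%:Z - 1)
       * qv ^ ((maj delta + maj pi)%:Z + (d%:Z - s%:Z + 1) * (d%:Z - r%:Z)))%R].
Proof.
move=> hm hn ud up dj hr hs m2 n1 h01 H.
have hdl : delta != [::] by rewrite -size_eq0 hm; case: (m) m2.
have hp : pi != [::] by rewrite -size_eq0 hn; case: (n) n1.
have [M1 M2] := main hp hdl H d.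
split.
{ rewrite /Sh_l big_filter_cond.
  apply: (etrans (perm_big _ (Sh_perm ud up dj))).
  rewrite big_map.
  transitivity (GD delta pi d + GP delta pi d); last first.
    rewrite M1 M2 /FP -hm -hn -hr -hs. rewrite /F1. ring.
  rewrite /GD /GP -big_split big_mkcond /=; apply: eq_big_seq => w hw.
  rewrite (head_char hw hdl hp dj).
  case: (head false w); case: (last false w); case: (_ == d); rewrite /= ?addr0 ?add0r; reflexivity. }
{ rewrite /Sh_ls /Sh_l 2!big_filter_cond.
  apply: (etrans (perm_big _ (Sh_perm ud up dj))); rewrite big_map.
  transitivity (GD delta pi d); last first.
    rewrite M1 -hm -hn -hr -hs. reflexivity.
  rewrite /GD big_mkcond /=; apply: eq_big_seq => w hw.
  rewrite (head_char hw hdl hp dj) (last_char hw hdl hp dj).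
  reflexivity. }
set x0 := head 0 delta. set dl' := behead delta.
have hD : delta = x0 :: dl' by rewrite /x0 /dl'; case: (delta) hdl.
have hdl' : dl' != [::] by rewrite -size_eq0 size_behead hm; case: (m) m2 => // [[]].
have H' : forall a b, a \in dl' -> b \in pi -> (b < a)%R.
  by move=> a b ha hb; apply: H => //; rewrite hD inE ha orbT.
have hx1 : head 0 dl' = nth 0 delta 1 by rewrite hD /= nth0.
have hx01 : (head 0 dl' < x0)%R = false.
  by apply/negbTE; rewrite -leNgt hx1 /x0 -nth0 ltW.
have [N1 N2] := main hp hdl' H' d.
rewrite /Sh_ll /Sh_l 2!big_filter_cond.
apply: (etrans (perm_big _ (Sh_perm ud up dj))); rewrite big_map.
rewrite big_seq_cond.
rewrite (eq_bigl (fun w => head false w && ((w \in W (size delta) (size pi)) &&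
    ((nth 0 (ileave w delta pi) 1 == nth 0 delta 1) && (des (ileave w delta pi) == d))))); last first.
  move=> w /=; case hw: (w \in W (size delta) (size pi)); last by rewrite !andbF.
  by rewrite (head_char hw hdl hp dj).
rewrite -big_filter_cond.
rewrite {1}hD /=.
apply: (etrans (perm_big _ (W_head _ _))); rewrite big_map.
transitivity (qv ^+ d * (GD dl' pi d + GP dl' pi d)); last first.
  rewrite N1 N2 /FP (_ : forall a b : RF, a + (b - a) = b); last by move=> *; ring.
  rewrite idA5 -hm -hn -hr -hs hD (des_cons _ hdl') (maj_cons _ hdl') hx01 /= add0n.
  rewrite (_ : (maj dl' + des dl' + maj pi)%N = (maj dl' + maj pi + des dl')%N); last lia.
  reflexivity.
rewrite /GD /GP -big_split mulr_sumr big_mkcond /=; apply: eq_big_seq => u hu.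
rewrite -/dl' -/x0.
have dj' : forall x, x \in pi -> x \notin dl'.
  move=> x hx; apply/negP => hx'; have := dj x hx; by rewrite hD inE hx' orbT.
have hin : (true :: u \in W (size delta) (size pi)) = true.
  move: hu; rewrite !memW hD /= => /andP [/eqP -> /eqP ->]; by rewrite add1n !eqxx.
have hα : ileave u dl' pi != [::].
  move: hu; rewrite memW => /andP [/eqP h1 /eqP h2].
  rewrite -size_eq0 size_ileave -count_size_bool h1 h2; apply/eqP; move: hdl'; rewrite -size_eq0; lia.
have hc : (nth 0 (ileave u dl' pi) 0 == nth 0 delta 1) = head false u.
  by rewrite -(head_char hu hdl' hp dj') hD.
rewrite hin hc (des_cons _ hα) (maj_cons _ hα).
case hu0: (head false u) => /=; last by ring.
rewrite head_ileave_t // hx01 /= !add0n.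
case e: (des (ileave u dl' pi) == d) => /=; last by rewrite !andbF; ring.
move/eqP: e => e; rewrite e exprD.
by case: (last false u) => /=; ring.
Qed.
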